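(* (Preservation for $\lambda_{\mathrm{act}}$ configurations.) If $\Gamma ; \Delta \vdash \mathcal{C}_1$ and $\mathcal{C}_1 \longrightarrow \mathcal{C}_2$, then $\Gamma ; \Delta \vdash \mathcal{C}_2$.
   Context: The calculus $\lambda_{\mathrm{act}}$. Types $A,B,C ::= \mathbf{1} \mid A \xrightarrow{C} B \mid \mathsf{ActorRef}(A)$; $\alpha$ ranges over variables and names; values $V,W ::= \alpha \mid \lambda x.M \mid ()$; computations $M,N ::= V\,W \mid \mathbf{let}\ x \Leftarrow M\ \mathbf{in}\ N \mid \mathbf{return}\ V \mid \mathbf{spawn}\ M \mid \mathbf{send}\ V\ W \mid \mathbf{receive} \mid \mathbf{self}$. Value typing: $\Gamma\vdash\alpha:A$ if $\alpha:A\in\Gamma$; $\Gamma\vdash\lambda x.M:A\xrightarrow{C}B$ if $\Gamma,x:A\mid C\vdash M:B$; $\Gamma\vdash():\mathbf 1$. Computation typing $\Gamma\mid C\vdash M:A$: $V\,W:B$ if $\Gamma\vdash V:A\xrightarrow{C}B$, $\Gamma\vdash W:A$; $\Gamma\mid C\vdash\mathbf{let}\ x\Leftarrow M\ \mathbf{in}\ N:B$ if $\Gamma\mid C\vdash M:A$, $\Gamma,x:A\mid C\vdash N:B$; $\Gamma\mid C\vdash\mathbf{return}\ V:A$ if $\Gamma\vdash V:A$; $\Gamma\mid C\vdash\mathbf{send}\ V\ W:\mathbf 1$ if $\Gamma\vdash V:A$, $\Gamma\vdash W:\mathsf{ActorRef}(A)$; $\Gamma\mid A\vdash\mathbf{receive}:A$;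 $\Gamma\mid C\vdash\mathbf{spawn}\ M:\mathsf{ActorRef}(A)$ if $\Gamma\mid A\vdash M:\mathbf 1$; $\Gamma\mid A\vdash\mathbf{self}:\mathsf{ActorRef}(A)$. Evaluation contexts $E ::= [\,]\mid\mathbf{let}\ x\Leftarrow E\ \mathbf{in}\ M$; term reduction: $(\lambda x.M)V\longrightarrow_{\mathsf{M}} M\{V/x\}$, $\mathbf{let}\ x\Leftarrow\mathbf{return}\ V\ \mathbf{in}\ M\longrightarrow_{\mathsf{M}} M\{V/x\}$, $E[M]\longrightarrow_{\mathsf{M}}E[M']$ if $M\longrightarrow_{\mathsf{M}}M'$. Configurations $\mathcal{C},\mathcal{D} ::= \mathcal{C}\parallel\mathcal{D}\mid(\nu a)\mathcal{C}\mid\langle a,M,\vec V\rangle$ (actor named $a$ evaluating $M$ with mailbox $\vec V=V_1\cdot\ldots\cdot V_n$; $\epsilon$ empty). Configuration contexts $G ::= [\,]\mid G\parallel\mathcal{C}\mid(\nu a)G$. Configuration typing: (Par) $\Gamma;\Delta_1\vdash\mathcal{C}_1$, $\Gamma;\Delta_2\vdash\mathcal{C}_2$ give $\Gamma;\Delta_1,\Delta_2\vdash\mathcal{C}_1\parallel\mathcal{C}_2$; (Pid) $\Gamma,a:\mathsf{ActorRef}(A);\Delta,a:A\vdash\mathcal{C}$ gives $\Gamma;\Delta\vdash(\nu a)\mathcal{C}$; (Actor) $\Gamma,a:\mathsf{ActorRef}(A)\mid A\vdash M:\mathbf 1$ and $\Gamma,a:\mathsf{ActorRef}(A)\vdash V_i:A$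 for all $i$ give $\Gamma,a:\mathsf{ActorRef}(A);a:A\vdash\langle a,M,\vec V\rangle$. Structural congruence $\equiv$: least congruence closed under $G[-]$ with commutativity/associativity of $\parallel$ and $\mathcal{C}\parallel(\nu a)\mathcal{D}\equiv(\nu a)(\mathcal{C}\parallel\mathcal{D})$ if $a\notin\mathsf{fv}(\mathcal{C})$. Reduction $\longrightarrow$ (modulo $\equiv$): (Spawn) $\langle a,E[\mathbf{spawn}\ M],\vec V\rangle\longrightarrow(\nu b)(\langle a,E[\mathbf{return}\ b],\vec V\rangle\parallel\langle b,M,\epsilon\rangle)$, $b$ fresh; (Send) $\langle a,E[\mathbf{send}\ V'\ b],\vec V\rangle\parallel\langle b,M,\vec W\rangle\longrightarrow\langle a,E[\mathbf{return}\ ()],\vec V\rangle\parallel\langle b,M,\vec W\cdot V'\rangle$; (SendSelf) $\langle a,E[\mathbf{send}\ V'\ a],\vec V\rangle\longrightarrow\langle a,E[\mathbf{return}\ ()],\vec V\cdot V'\rangle$; (Self) $\langle a,E[\mathbf{self}],\vec V\rangle\longrightarrow\langle a,E[\mathbf{return}\ a],\vec V\rangle$; (Receive) $\langle a,E[\mathbf{receive}],W\cdot\vec V\rangle\longrightarrow\langle a,E[\mathbf{return}\ W],\vec V\rangle$; (Lift) $G[\mathcal{C}_1]\longrightarrow G[\mathcal{C}_2]$ if $\mathcal{C}_1\longrightarrow\mathcal{C}_2$; (LiftM) $\langle a,M_1,\vec V\rangle\longrightarrow\langle a,M_2,\vec V\rangle$ if $M_1\longrightarrow_{\mathsf{M}}M_2$.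 *)

(* Defs.v *)
(* The calculus lambda_act: syntax, typing, structural
   congruence and reduction of configurations.
   Variables are de Bruijn indices; actor names are atoms (nat). *)
From Stdlib Require Import Arith List.
Import ListNotations.

Inductive ty : Type :=
| TUnit : ty
| TFun  : ty -> ty -> ty -> ty    (* TFun A C B  =  A -C-> B *)
| TRef  : ty -> ty.

Definition name := nat.

Inductive value : Type :=
| VVar  : nat -> value
| VName : name -> value
| VLam  : comp -> value           (* \x. M  (binds index 0 in M) *)
| VUnit : value
with comp : Type :=
| CApp     : value -> value -> comp
| CLet     : comp -> comp -> comp (* let x <= M in N  (binds index 0 in N) *)
| CRet     : value -> comp
| CSpawn   : comp -> comp
| CSend    : value -> value -> comp
| CReceive : comp
| CSelf    : comp.

Fixpoint liftV (c : nat) (V : value) : value :=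
  match V with
  | VVar n => if c <=? n then VVar (S n) else VVar n
  | VName a => VName a
  | VLam M => VLam (liftC (S c) M)
  | VUnit => VUnit
  end
with liftC (c : nat) (M : comp) : comp :=
  match M with
  | CApp V W => CApp (liftV c V) (liftV c W)
  | CLet M1 N1 => CLet (liftC c M1) (liftC (S c) N1)
  | CRet V => CRet (liftV c V)
  | CSpawn M1 => CSpawn (liftC c M1)
  | CSend V W => CSend (liftV c V) (liftV c W)
  | CReceive => CReceive
  | CSelf => CSelf
  end.

(* substV k U V : substitute U for index k in V (and lower indices above k) *)
Fixpoint substV (k : nat) (U : value) (V : value) : value :=
  match V with
  | VVar n => if n =? k then U else if k <? n then VVar (pred n) else VVar n
  | VName a => VName a
  | VLam M => VLam (substC (S k) (liftV 0 U) M)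
  | VUnit => VUnit
  end
with substC (k : nat) (U : value) (M : comp) : comp :=
  match M with
  | CApp V W => CApp (substV k U V) (substV k U W)
  | CLet M1 N1 => CLet (substC k U M1) (substC (S k) (liftV 0 U) N1)
  | CRet V => CRet (substV k U V)
  | CSpawn M1 => CSpawn (substC k U M1)
  | CSend V W => CSend (substV k U V) (substV k U W)
  | CReceive => CReceive
  | CSelf => CSelf
  end.

(* M{V/x} where x is the variable bound by the enclosing binder *)
Definition subst1 (M : comp) (V : value) : comp := substC 0 V M.

(* ---------- names occurring in terms (terms do not bind names) ---------- *)
Fixpoint occV (a : name) (V : value) : bool :=
  match V with
  | VVar _ => false
  | VName b => b =? a
  | VLam M => occC a M
  | VUnit => false
  end
with occC (a : name) (M : comp) : bool :=
  match M with
  | CApp V W => occV a V || occV a W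
  | CLet M1 N1 => occC a M1 || occC a N1
  | CRet V => occV a V
  | CSpawn M1 => occC a M1
  | CSend V W => occV a V || occV a W
  | CReceive => false
  | CSelf => false
  end.

Fixpoint renameV (a b : name) (V : value) : value :=
  match V with
  | VVar n => VVar n
  | VName c => VName (if c =? a then b else c)
  | VLam M => VLam (renameC a b M)
  | VUnit => VUnit
  end
with renameC (a b : name) (M : comp) : comp :=
  match M with
  | CApp V W => CApp (renameV a b V) (renameV a b W)
  | CLet M1 N1 => CLet (renameC a b M1) (renameC a b N1)
  | CRet V => CRet (renameV a b V)
  | CSpawn M1 => CSpawn (renameC a b M1)
  | CSend V W => CSend (renameV a b V) (renameV a b W)
  | CReceive => CReceive
  | CSelf => CSelf
  end.

(* Gamma is split into a variable part (list, de Bruijn) and a name part. *)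
Definition nctx := name -> option ty.
Definition upd (N : nctx) (a : name) (T : ty) : nctx :=
  fun b => if b =? a then Some T else N b.

(* ---------- term typing:  Gamma |- V : A   and   Gamma | C |- M : A ---------- *)
Inductive vtyp (G : list ty) (N : nctx) : value -> ty -> Prop :=
| tv_var n A : nth_error G n = Some A -> vtyp G N (VVar n) A
| tv_name a A : N a = Some A -> vtyp G N (VName a) A
| tv_lam M A C B : ctyp (A :: G) N C M B -> vtyp G N (VLam M) (TFun A C B)
| tv_unit : vtyp G N VUnit TUnit
with ctyp (G : list ty) (N : nctx) : ty -> comp -> ty -> Prop :=
| tc_app C V W A B :
    vtyp G N V (TFun A C B) -> vtyp G N W A -> ctyp G N C (CApp V W) B
| tc_let C M1 N1 A B :
    ctyp G N C M1 A -> ctyp (A :: G) N C N1 B -> ctyp G N C (CLet M1 N1) B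
| tc_ret C V A : vtyp G N V A -> ctyp G N C (CRet V) A
| tc_send C V W A :
    vtyp G N V A -> vtyp G N W (TRef A) -> ctyp G N C (CSend V W) TUnit
| tc_receive A : ctyp G N A CReceive A
| tc_spawn C M A : ctyp G N A M TUnit -> ctyp G N C (CSpawn M) (TRef A)
| tc_self A : ctyp G N A CSelf (TRef A).

Inductive ectx : Type :=
| EHole : ectx
| ELet  : ectx -> comp -> ectx.

Fixpoint plugE (E : ectx) (M : comp) : comp :=
  match E with
  | EHole => M
  | ELet E1 N1 => CLet (plugE E1 M) N1
  end.

Inductive redM : comp -> comp -> Prop :=
| rm_beta M V : redM (CApp (VLam M) V) (subst1 M V)
| rm_let V M : redM (CLet (CRet V) M) (subst1 M V)
| rm_ctx E M M' : redM M M' -> redM (plugE E M) (plugE E M').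

Inductive config : Type :=
| KPar   : config -> config -> config
| KNu    : name -> config -> config
| KActor : name -> comp -> list value -> config.

Fixpoint fnK (a : name) (C : config) : bool :=
  match C with
  | KPar C1 C2 => fnK a C1 || fnK a C2
  | KNu b C1 => if b =? a then false else fnK a C1
  | KActor b M mb => (b =? a) || occC a M || existsb (occV a) mb
  end.

Fixpoint allnamesK (a : name) (C : config) : bool :=
  match C with
  | KPar C1 C2 => allnamesK a C1 || allnamesK a C2
  | KNu b C1 => (b =? a) || allnamesK a C1
  | KActor b M mb => (b =? a) || occC a M || existsb (occV a) mb
  end.

Fixpoint renameK (a b : name) (C : config) : config :=
  match C with
  | KPar C1 C2 => KPar (renameK a b C1) (renameK a b C2)
  | KNu c C1 => if c =? a then KNu c C1 else KNu c (renameK a b C1)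
  | KActor c M mb =>
      KActor (if c =? a then b else c) (renameC a b M) (map (renameV a b) mb)
  end.

Inductive gctx : Type :=
| GHole : gctx
| GPar  : gctx -> config -> gctx
| GNu   : name -> gctx -> gctx.

Fixpoint plugG (G : gctx) (C : config) : config :=
  match G with
  | GHole => C
  | GPar G1 D => KPar (plugG G1 C) D
  | GNu a G1 => KNu a (plugG G1 C)
  end.

(* structural congruence: least congruence (w.r.t. configuration contexts)
   containing commutativity/associativity of || and scope extrusion;
   alpha-conversion of nu-binders is made explicit. *)
Inductive scong : config -> config -> Prop :=
| sc_refl C : scong C C
| sc_sym C D : scong C D -> scong D C
| sc_trans C D E : scong C D -> scong D E -> scong C E
| sc_ctx G C D : scong C D -> scong (plugG G C) (plugG G D)
| sc_comm C D : scong (KPar C D) (KPar D C)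
| sc_assoc C D E : scong (KPar C (KPar D E)) (KPar (KPar C D) E)
| sc_extr a C D : fnK a C = false -> scong (KPar C (KNu a D)) (KNu a (KPar C D))
| sc_alpha a b C : allnamesK b C = false -> scong (KNu a C) (KNu b (renameK a b C)).

Inductive red : config -> config -> Prop :=
| r_spawn a E M mb b :
    fnK b (KActor a (plugE E (CSpawn M)) mb) = false ->
    red (KActor a (plugE E (CSpawn M)) mb)
        (KNu b (KPar (KActor a (plugE E (CRet (VName b))) mb) (KActor b M [])))
| r_send a E V' b mb M mbb :
    red (KPar (KActor a (plugE E (CSend V' (VName b))) mb) (KActor b M mbb))
        (KPar (KActor a (plugE E (CRet VUnit)) mb) (KActor b M (mbb ++ [V'])))
| r_sendself a E V' mb :
    red (KActor a (plugE E (CSend V' (VName a))) mb)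
        (KActor a (plugE E (CRet VUnit)) (mb ++ [V']))
| r_self a E mb :
    red (KActor a (plugE E CSelf) mb) (KActor a (plugE E (CRet (VName a))) mb)
| r_receive a E W mb :
    red (KActor a (plugE E CReceive) (W :: mb)) (KActor a (plugE E (CRet W)) mb)
| r_lift G C1 C2 : red C1 C2 -> red (plugG G C1) (plugG G C2)
| r_liftM a M1 M2 mb : redM M1 M2 -> red (KActor a M1 mb) (KActor a M2 mb)
| r_cong C C' D' D : scong C C' -> red C' D' -> scong D' D -> red C D.

Definition dctx := name -> option ty.

Definition disj_union (D D1 D2 : dctx) : Prop :=
  forall x, (D1 x = None \/ D2 x = None) /\
            D x = match D1 x with Some T => Some T | None => D2 x end.

Inductive ktyp (G : list ty) : nctx -> dctx -> config -> Prop :=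
| tk_par N D D1 D2 C1 C2 :
    disj_union D D1 D2 -> ktyp G N D1 C1 -> ktyp G N D2 C2 ->
    ktyp G N D (KPar C1 C2)
| tk_pid N D D' a A C :
    D a = None -> D' a = Some A -> (forall x, x <> a -> D' x = D x) ->
    ktyp G (upd N a (TRef A)) D' C ->
    ktyp G N D (KNu a C)
| tk_actor N D a A M mb :
    N a = Some (TRef A) -> D a = Some A -> (forall x, x <> a -> D x = None) ->
    ctyp G N A M TUnit -> Forall (fun V => vtyp G N V A) mb ->
    ktyp G N D (KActor a M mb).

(* Main.v *)
Require Import Defs.
From Stdlib Require Import Bool Arith List Lia.
Import ListNotations.

Scheme vtyp_ind' := Induction for vtyp Sort Prop
with ctyp_ind' := Induction for ctyp Sort Prop.
Combined Scheme typ_mutind from vtyp_ind', ctyp_ind'.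

Scheme value_ind' := Induction for value Sort Prop
with comp_ind' := Induction for comp Sort Prop.
Combined Scheme term_mutind from value_ind', comp_ind'.

Ltac orsplit H := repeat (apply orb_false_iff in H; destruct H as [? H]).

Lemma tagree :
  forall G N, (forall V T, vtyp G N V T -> forall N', (forall x, occV x V = true -> N' x = N x) -> vtyp G N' V T) /\
  (forall C M T, ctyp G N C M T -> forall N', (forall x, occC x M = true -> N' x = N x) -> ctyp G N' C M T).
Proof.
  apply typ_mutind; intros; simpl in *; try (econstructor; eauto; fail).
  - constructor. rewrite H; auto. rewrite Nat.eqb_refl; auto.
  - econstructor; [apply H|apply H0]; intros x Hx; apply H1; rewrite Hx; auto with bool.
  - econstructor; [apply H|apply H0]; intros x Hx; apply H1; rewrite Hx; auto with bool.
  - econstructor; [apply H|apply H0]; intros x Hx; apply H1; rewrite Hx; auto with bool.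
Qed.

Lemma tren :
  forall G N, (forall V T, vtyp G N V T -> forall a b N', occV b V = false -> N' b = N a ->
     (forall x, x <> a -> x <> b -> N' x = N x) -> vtyp G N' (renameV a b V) T) /\
  (forall C M T, ctyp G N C M T -> forall a b N', occC b M = false -> N' b = N a ->
     (forall x, x <> a -> x <> b -> N' x = N x) -> ctyp G N' C (renameC a b M) T).
Proof.
  apply typ_mutind; intros; simpl in *; try (econstructor; eauto; fail).
  - constructor. destruct (Nat.eqb_spec a a0).
    + subst; congruence.
    + apply Nat.eqb_neq in H. rewrite H1; auto.
  - apply orb_false_iff in H1 as [? ?]. econstructor; eauto.
  - apply orb_false_iff in H1 as [? ?]. econstructor; eauto.
  - apply orb_false_iff in H1 as [? ?]. econstructor; eauto.
Qed.

Lemma occ_ren_self : forall a b, a <> b ->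
  (forall V, occV a (renameV a b V) = false) /\ (forall M, occC a (renameC a b M) = false).
Proof.
  intros a b Hab. apply term_mutind; intros; simpl; auto;
  try (rewrite H, H0; auto).
  destruct (Nat.eqb_spec n a); apply Nat.eqb_neq; congruence.
Qed.

Lemma ren_nofree : forall a b,
  (forall V, occV a V = false -> renameV a b V = V) /\ (forall M, occC a M = false -> renameC a b M = M).
Proof.
  intros a b. apply term_mutind; intros; simpl in *; auto;
  try (apply orb_false_iff in H1 as [? ?]; rewrite H, H0; auto);
  try (rewrite H; auto).
Qed.

Lemma ren_id : forall a,
  (forall V, renameV a a V = V) /\ (forall M, renameC a a M = M).
Proof.
  intros a. apply term_mutind; intros; simpl in *; auto; try congruence.
  destruct (Nat.eqb_spec n a); subst; auto.
Qed.

Lemma ren_inv : forall a b,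
  (forall V, occV b V = false -> renameV b a (renameV a b V) = V) /\
  (forall M, occC b M = false -> renameC b a (renameC a b M) = M).
Proof.
  intros a b. apply term_mutind; intros; simpl in *; auto;
  try (apply orb_false_iff in H1 as [? ?]; rewrite H, H0; auto);
  try (rewrite H; auto).
  destruct (Nat.eqb_spec n a); subst.
  - rewrite Nat.eqb_refl; auto.
  - rewrite H; auto.
Qed.

Lemma tlift : forall G N,
  (forall V T, vtyp G N V T -> forall G1 G2 X, G = G1 ++ G2 ->
     vtyp (G1 ++ X :: G2) N (liftV (length G1) V) T) /\
  (forall C M T, ctyp G N C M T -> forall G1 G2 X, G = G1 ++ G2 ->
     ctyp (G1 ++ X :: G2) N C (liftC (length G1) M) T).
Proof.
  apply typ_mutind; intros; subst; simpl in *; try (econstructor; eauto; fail).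
  - destruct (Nat.leb_spec (length G1) n); constructor.
    + rewrite nth_error_app2 in e by lia. rewrite nth_error_app2 by lia.
      replace (S n - length G1) with (S (n - length G1)) by lia. simpl. auto.
    + rewrite nth_error_app1 in e by lia. rewrite nth_error_app1 by lia. auto.
  - constructor. apply (H (A :: G1) G2 X). auto.
  - econstructor; eauto. apply (H0 (A :: G1) G2 X). auto.
Qed.

Lemma tsubst : forall G N,
  (forall V T, vtyp G N V T -> forall G1 A G2 U, G = G1 ++ A :: G2 ->
     vtyp (G1 ++ G2) N U A -> vtyp (G1 ++ G2) N (substV (length G1) U V) T) /\
  (forall C M T, ctyp G N C M T -> forall G1 A G2 U, G = G1 ++ A :: G2 ->
     vtyp (G1 ++ G2) N U A -> ctyp (G1 ++ G2) N C (substC (length G1) U M) T).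
Proof.
  apply typ_mutind; intros; subst; simpl in *; try (econstructor; eauto; fail).
  - destruct (Nat.eqb_spec n (length G1)).
    + subst. rewrite nth_error_app2 in e by lia. rewrite Nat.sub_diag in e. simpl in e.
      congruence.
    + destruct (Nat.ltb_spec (length G1) n); constructor.
      * rewrite nth_error_app2 in e by lia. rewrite nth_error_app2 by lia.
        replace (n - length G1) with (S (pred n - length G1)) in e by lia. simpl in e. auto.
      * rewrite nth_error_app1 in e by lia. rewrite nth_error_app1 by lia. auto.
  - constructor. apply (H (A :: G1) A0 G2). auto.
    apply (proj1 (tlift _ _) _ _ H1 [] _ A eq_refl).
  - econstructor; eauto. apply (H0 (A :: G1) A0 G2). auto.
    apply (proj1 (tlift _ _) _ _ H2 [] _ A eq_refl).
Qed.

Lemma tsubst1 : forall G N A C M B U, ctyp (A :: G) N C M B -> vtyp G N U A ->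
  ctyp G N C (subst1 M U) B.
Proof.
  intros. apply (proj2 (tsubst _ _) _ _ _ H [] A G U eq_refl H0).
Qed.

Lemma plugE_inv : forall G N C E M T, ctyp G N C (plugE E M) T ->
  exists T', ctyp G N C M T' /\ forall M', ctyp G N C M' T' -> ctyp G N C (plugE E M') T.
Proof.
  induction E; simpl; intros.
  - eauto.
  - inversion H; subst. destruct (IHE _ _ H3) as [T' [H1 H2]].
    exists T'; split; auto. intros. econstructor; eauto.
Qed.

Lemma redM_pres : forall M M', redM M M' -> forall G N C T, ctyp G N C M T -> ctyp G N C M' T.
Proof.
  induction 1; intros.
  - inversion H; subst. inversion H3; subst. eapply tsubst1; eauto.
  - inversion H; subst. match goal with h: ctyp _ _ _ (CRet _) _ |- _ => inversion h; subst end. eapply tsubst1; eauto.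
  - destruct (plugE_inv _ _ _ _ _ _ H0) as [T' [H1 H2]]. eauto.
Qed.

Ltac dus :=
  unfold disj_union in *;
  repeat match goal with H : forall x : name, _ |- _ => specialize (H _) end;
  repeat match goal with
         | |- context [match ?e with _ => _ end] => destruct e eqn:?
         | H : context [match ?e with _ => _ end] |- _ => destruct e eqn:?
         end; intuition congruence.

Lemma kagree : forall G N D C, ktyp G N D C -> forall N' D',
  (forall x, fnK x C = true -> N' x = N x) -> (forall x, D' x = D x) -> ktyp G N' D' C.
Proof.
  induction 1; intros N' D'' HN HD; simpl in *.
  - apply tk_par with D1 D2.
    + unfold disj_union in *. intro x. rewrite HD. apply H.
    + apply IHktyp1; auto. intros x Hx; apply HN; rewrite Hx; auto.
    + apply IHktyp2; auto. intros x Hx; apply HN; rewrite Hx; auto with bool.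
  - econstructor; [rewrite HD; eauto | eauto | | ].
    + intros x Hx. rewrite HD. auto.
    + apply IHktyp; auto. intros x Hx. unfold upd. destruct (Nat.eqb_spec x a); auto.
      apply HN. apply Nat.eqb_neq in n. rewrite Nat.eqb_sym, n. auto.
  - econstructor.
    + rewrite HN; [eauto|]. rewrite Nat.eqb_refl; auto.
    + rewrite HD; eauto.
    + intros; rewrite HD; auto.
    + eapply (proj2 (tagree _ _)); [eassumption|]. intros x Hx; apply HN; rewrite Hx; auto with bool.
    + rewrite Forall_forall in *. intros V HV.
      eapply (proj1 (tagree _ _)); [auto|]. intros x Hx; apply HN.
      assert (existsb (occV x) mb = true) as E by (apply existsb_exists; eauto).
      rewrite E; auto with bool.
Qed.

Lemma fn_dom : forall G N D C, ktyp G N D C -> forall x T, D x = Some T -> fnK x C = true.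
Proof.
  induction 1; intros x T Hx; simpl.
  - specialize (H x). destruct H as [_ H]. rewrite H in Hx.
    destruct (D1 x) eqn:E.
    + rewrite (IHktyp1 x t E); auto.
    + rewrite (IHktyp2 x T Hx); auto with bool.
  - destruct (Nat.eqb_spec a x).
    + subst; congruence.
    + apply (IHktyp x T). rewrite H1; auto.
  - destruct (Nat.eqb_spec a x); auto.
    rewrite H1 in Hx; auto; discriminate.
Qed.

Lemma fn_dom_none : forall G N D C, ktyp G N D C -> forall x, fnK x C = false -> D x = None.
Proof.
  intros. destruct (D x) eqn:E; auto. erewrite fn_dom in H0; eauto. discriminate.
Qed.

Lemma fn_all : forall x C, fnK x C = true -> allnamesK x C = true.
Proof.
  induction C; simpl; intros.
  - apply orb_true_iff in H as [H|H]; [rewrite IHC1 | rewrite IHC2]; auto with bool.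
  - destruct (n =? x); simpl; auto.
  - auto.
Qed.

Lemma all_fn : forall x C, allnamesK x C = false -> fnK x C = false.
Proof.
  intros. destruct (fnK x C) eqn:E; auto. apply fn_all in E. congruence.
Qed.

Fixpoint safe (a b : name) (C : config) : bool :=
  match C with
  | KPar C1 C2 => safe a b C1 && safe a b C2
  | KNu c C1 => if c =? a then true else if c =? b then negb (fnK a C1) else safe a b C1
  | KActor _ _ _ => true
  end.

Lemma all_safe : forall a b C, allnamesK b C = false -> safe a b C = true.
Proof.
  induction C; simpl; intros.
  - apply orb_false_iff in H as [? ?]. rewrite IHC1, IHC2; auto.
  - apply orb_false_iff in H as [H1 H2]. rewrite H1. destruct (n =? a); auto.
  - auto.
Qed.

Lemma renK_fn : forall a b C, a <> b -> fnK a (renameK a b C) = false.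
Proof.
  induction C; simpl; intros.
  - rewrite IHC1, IHC2; auto.
  - destruct (Nat.eqb_spec n a); simpl.
    + subst. rewrite Nat.eqb_refl. auto.
    + apply Nat.eqb_neq in n0. rewrite n0. auto.
  - rewrite (proj2 (occ_ren_self a b H)).
    assert (existsb (occV a) (map (renameV a b) l) = false).
    { apply not_true_iff_false. intro E. apply existsb_exists in E as [V [HV HV']].
      apply in_map_iff in HV as [W [<- _]]. rewrite (proj1 (occ_ren_self a b H)) in HV'. discriminate. }
    rewrite H0. destruct (Nat.eqb_spec n a); simpl; rewrite ?orb_false_r.
    + apply Nat.eqb_neq. auto.
    + apply Nat.eqb_neq. auto.
Qed.

Lemma renK_safe : forall a b C, allnamesK b C = false -> safe b a (renameK a b C) = true.
Proof.
  induction C; simpl; intros.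
  - apply orb_false_iff in H as [? ?]. rewrite IHC1, IHC2; auto.
  - apply orb_false_iff in H as [H1 H2]. destruct (Nat.eqb_spec n a); simpl.
    + rewrite H1. subst. rewrite Nat.eqb_refl. rewrite all_fn; auto.
    + rewrite H1. apply Nat.eqb_neq in n0. rewrite n0. auto.
  - auto.
Qed.

Lemma renK_nofree : forall a b C, fnK a C = false -> renameK a b C = C.
Proof.
  induction C; simpl; intros.
  - apply orb_false_iff in H as [? ?]. rewrite IHC1, IHC2; auto.
  - destruct (n =? a); auto. rewrite IHC; auto.
  - apply orb_false_iff in H as [H H2]. apply orb_false_iff in H as [H H1].
    rewrite H. rewrite (proj2 (ren_nofree a b) c H1).
    f_equal. rewrite <- (map_id l) at 2. apply map_ext_in. intros V HV.
    apply (proj1 (ren_nofree a b)). destruct (occV a V) eqn:E; auto.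
    assert (existsb (occV a) l = true) by (apply existsb_exists; eauto). congruence.
Qed.

Lemma renK_id : forall a C, renameK a a C = C.
Proof.
  induction C; simpl; intros.
  - rewrite IHC1, IHC2; auto.
  - destruct (n =? a); auto. rewrite IHC; auto.
  - rewrite (proj2 (ren_id a)). f_equal.
    + destruct (Nat.eqb_spec n a); auto.
    + rewrite <- (map_id l) at 2. apply map_ext. apply (proj1 (ren_id a)).
Qed.

Lemma renK_inv : forall a b C, allnamesK b C = false -> renameK b a (renameK a b C) = C.
Proof.
  induction C; simpl; intros.
  - apply orb_false_iff in H as [? ?]. rewrite IHC1, IHC2; auto.
  - apply orb_false_iff in H as [H1 H2]. destruct (n =? a); simpl; rewrite H1.
    + rewrite renK_nofree; auto. apply all_fn; auto.
    + rewrite IHC; auto.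
  - apply orb_false_iff in H as [H H2]. apply orb_false_iff in H as [H H1].
    rewrite (proj2 (ren_inv a b) c H1). f_equal.
    + destruct (Nat.eqb_spec n a); subst.
      * rewrite Nat.eqb_refl; auto.
      * rewrite H; auto.
    + rewrite map_map. rewrite <- (map_id l) at 2. apply map_ext_in. intros V HV.
      apply (proj1 (ren_inv a b)). destruct (occV b V) eqn:E; auto.
      assert (existsb (occV b) l = true) by (apply existsb_exists; eauto). congruence.
Qed.

Definition rD (a b : name) (D : dctx) : dctx :=
  fun x => if x =? b then D a else if x =? a then None else D x.

Lemma kren : forall G N D C, ktyp G N D C -> forall a b N', a <> b ->
  fnK b C = false -> safe a b C = true -> N' b = N a ->
  (forall x, x <> a -> x <> b -> N' x = N x) -> ktyp G N' (rD a b D) (renameK a b C).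
Proof.
  induction 1; intros a0 b N' Hab Hfb Hs HNb HNx; simpl in *.
  - apply orb_false_iff in Hfb as [F1 F2]. apply andb_true_iff in Hs as [S1 S2].
    apply tk_par with (rD a0 b D1) (rD a0 b D2); auto.
    unfold rD, disj_union in *; intro x; destruct (x =? b), (x =? a0); auto.
  - destruct (Nat.eqb_spec a a0).
    +
      subst. apply kagree with N D.
      * econstructor; eauto.
      * intros x Hx. simpl in Hx. destruct (Nat.eqb_spec a0 x); try discriminate.
        apply HNx; auto. intro; subst. destruct (Nat.eqb_spec a0 b); congruence.
      * intro x. unfold rD. destruct (Nat.eqb_spec x b).
        -- subst. rewrite H. symmetry. eapply fn_dom_none; [eapply tk_pid; eauto|]. simpl.
           exact Hfb.
        -- destruct (Nat.eqb_spec x a0); subst; auto.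
    + destruct (Nat.eqb_spec a b).
      *
        subst. apply Bool.negb_true_iff in Hs.
        rewrite renK_nofree by auto.
        assert (Da : D a0 = None).
        { eapply fn_dom_none; [eapply tk_pid; eauto|]. simpl.
          destruct (Nat.eqb_spec b a0); auto. }
        apply kagree with N D.
        -- econstructor; eauto.
        -- intros x Hx. simpl in Hx. destruct (Nat.eqb_spec b x); try discriminate.
           apply HNx; auto. intro; subst. congruence.
        -- intro x. unfold rD. destruct (Nat.eqb_spec x b).
           ++ subst. congruence.
           ++ destruct (Nat.eqb_spec x a0); subst; auto.
      * assert (E1 : (a =? a0) = false) by (apply Nat.eqb_neq; auto).
        assert (E2 : (a =? b) = false) by (apply Nat.eqb_neq; auto).
        assert (E3 : (a0 =? a) = false) by (apply Nat.eqb_neq; auto).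
        assert (E4 : (b =? a) = false) by (apply Nat.eqb_neq; auto).
        rewrite ?E1, ?E2 in Hs. rewrite ?E2 in Hfb.
        apply tk_pid with (rD a0 b D') A.
        -- unfold rD. rewrite E1, E2. auto.
        -- unfold rD. rewrite E1, E2. auto.
        -- intros x Hx. unfold rD. destruct (x =? b); [apply H1; auto|].
           destruct (x =? a0); auto.
        -- apply IHktyp; auto.
           ++ unfold upd. rewrite E3, E4. auto.
           ++ intros x Hx1 Hx2. unfold upd. destruct (x =? a); auto.
  - apply orb_false_iff in Hfb as [Hfb F3]. apply orb_false_iff in Hfb as [F1 F2].
    apply Nat.eqb_neq in F1.
    econstructor.
    + destruct (Nat.eqb_spec a a0).
      * subst. rewrite HNb. eauto.
      * rewrite HNx; auto.
    + unfold rD. destruct (Nat.eqb_spec a a0).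
      * subst. rewrite Nat.eqb_refl. auto.
      * apply Nat.eqb_neq in n. apply Nat.eqb_neq in F1. rewrite F1, n. auto.
    + intros x Hx. unfold rD. destruct (Nat.eqb_spec x b).
      * subst. apply H1. intro; subst. rewrite Nat.eqb_refl in Hx. auto.
      * destruct (Nat.eqb_spec x a0); auto. apply H1. intro Ex; subst x.
        destruct (Nat.eqb_spec a a0); congruence.
    + eapply (proj2 (tren _ _)); eauto.
    + rewrite Forall_forall in *. intros V HV. apply in_map_iff in HV as [W [<- HW]].
      eapply (proj1 (tren _ _)); eauto.
      destruct (occV b W) eqn:E; auto.
      assert (existsb (occV b) mb = true) by (apply existsb_exists; eauto). congruence.
Qed.

Ltac dus2 :=
  unfold disj_union in *; let x := fresh "x" in intro x;
  repeat match goal with H : forall y : name, _ |- _ => specialize (H x) end;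
  repeat match goal with
         | |- context [match ?e with _ => _ end] => destruct e eqn:?
         | H : context [match ?e with _ => _ end] |- _ => destruct e eqn:?
         end; intuition congruence.

Lemma plugG_imp : forall Gm g C D,
  (forall N Dl, ktyp Gm N Dl C -> ktyp Gm N Dl D) ->
  forall N Dl, ktyp Gm N Dl (plugG g C) -> ktyp Gm N Dl (plugG g D).
Proof.
  induction g; simpl; intros; auto.
  - inversion H0; subst. eapply tk_par; eauto.
  - inversion H0; subst. eapply tk_pid; eauto.
Qed.

Lemma upd_agree : forall N a T C, fnK a C = false ->
  forall x, fnK x C = true -> upd N a T x = N x.
Proof.
  intros. unfold upd. destruct (Nat.eqb_spec x a); subst; congruence.
Qed.

Lemma alpha_fwd : forall Gm N Dl a b C, a <> b -> allnamesK b C = false ->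
  ktyp Gm N Dl (KNu a C) -> ktyp Gm N Dl (KNu b (renameK a b C)).
Proof.
  intros. inversion H1; subst.
  apply tk_pid with (rD a b D') A.
  - eapply fn_dom_none; eauto. simpl. destruct (Nat.eqb_spec a b); try congruence.
    apply all_fn; auto.
  - unfold rD. rewrite Nat.eqb_refl. auto.
  - intros x Hx. unfold rD. apply Nat.eqb_neq in Hx. rewrite Hx.
    destruct (Nat.eqb_spec x a); subst; auto.
  - eapply kren; eauto.
    + apply all_fn; auto.
    + apply all_safe; auto.
    + unfold upd. rewrite !Nat.eqb_refl. auto.
    + intros x Hx1 Hx2. unfold upd. apply Nat.eqb_neq in Hx1, Hx2. rewrite Hx1, Hx2. auto.
Qed.

Lemma alpha_bwd : forall Gm N Dl a b C, a <> b -> allnamesK b C = false ->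
  ktyp Gm N Dl (KNu b (renameK a b C)) -> ktyp Gm N Dl (KNu a C).
Proof.
  intros. inversion H1; subst.
  rewrite <- (renK_inv a b C H0).
  apply tk_pid with (rD b a D') A.
  - eapply fn_dom_none; eauto. simpl. destruct (Nat.eqb_spec b a); try congruence.
    apply renK_fn; auto.
  - unfold rD. rewrite Nat.eqb_refl. auto.
  - intros x Hx. unfold rD. apply Nat.eqb_neq in Hx. rewrite Hx.
    destruct (Nat.eqb_spec x b); subst; auto.
  - eapply kren; eauto.
    + apply renK_fn; auto.
    + apply renK_safe; auto.
    + unfold upd. rewrite !Nat.eqb_refl. auto.
    + intros x Hx1 Hx2. unfold upd. apply Nat.eqb_neq in Hx1, Hx2. rewrite Hx1, Hx2. auto.
Qed.

Lemma scong_pres : forall Gm C D, scong C D -> forall N Dl,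
  (ktyp Gm N Dl C -> ktyp Gm N Dl D) /\ (ktyp Gm N Dl D -> ktyp Gm N Dl C).
Proof.
  induction 1; intros N Dl.
  - tauto.
  - destruct (IHscong N Dl); tauto.
  - destruct (IHscong1 N Dl); destruct (IHscong2 N Dl); tauto.
  - split; apply plugG_imp; intros; apply (IHscong N0 Dl0); auto.
  - split; intro H; inversion H; subst; apply tk_par with D2 D1; auto; dus2.
  - split; intro H; inversion H; subst.
    + match goal with h : ktyp _ _ _ (KPar _ _) |- _ => inversion h; subst end.
      apply tk_par with (fun x => match D1 x with Some T => Some T | None => D3 x end) D4; auto.
      * dus2.
      * apply tk_par with D1 D3; auto. dus2.
    + match goal with h : ktyp _ _ _ (KPar _ _) |- _ => inversion h; subst end.
      apply tk_par with D3 (fun x => match D4 x with Some T => Some T | None => D2 x end); auto.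
      * dus2.
      * apply tk_par with D4 D2; auto. dus2.
  - split; intro H'; inversion H'; subst.
    + match goal with h : ktyp _ _ _ (KNu _ _) |- _ => inversion h; subst end.
      assert (E1 : D1 a = None) by (eapply fn_dom_none; eauto).
      apply tk_pid with (fun x => if x =? a then Some A else Dl x) A.
      * unfold disj_union in H2. destruct (H2 a) as [_ E]. rewrite E, E1. auto.
      * rewrite Nat.eqb_refl. auto.
      * intros x Hx. apply Nat.eqb_neq in Hx. rewrite Hx. auto.
      * apply tk_par with D1 D'; auto.
        -- unfold disj_union in *. intro x. cbv beta. destruct (Nat.eqb_spec x a).
           ++ subst. rewrite E1, H4. auto.
           ++ rewrite H9 by auto. apply H2.
        -- eapply kagree; [eassumption| |reflexivity]. intros x Hx. apply (upd_agree N a (TRef A) C); auto.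
    + match goal with h : ktyp _ _ _ (KPar _ _) |- _ => inversion h; subst end.
      assert (E1 : D1 a = None) by (eapply fn_dom_none; eauto).
      assert (E2 : D2 a = Some A).
      { unfold disj_union in *. destruct (H4 a) as [_ E]. rewrite E1 in E. congruence. }
      apply tk_par with D1 (fun x => if x =? a then None else D2 x).
      * unfold disj_union in *. intro x. cbv beta. destruct (Nat.eqb_spec x a).
        -- subst. rewrite E1, H2. auto.
        -- rewrite <- H6 by auto. apply H4.
      * eapply kagree; [eassumption| |reflexivity]. intros x Hx. symmetry. apply upd_agree with C; auto.
      * apply tk_pid with D2 A; auto.
        -- rewrite Nat.eqb_refl. auto.
        -- intros x Hx. apply Nat.eqb_neq in Hx. rewrite Hx. auto.
  - destruct (Nat.eqb_spec a b).
    + subst. rewrite renK_id. tauto.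
    + split; [apply alpha_fwd | apply alpha_bwd]; auto.
Qed.

Lemma plugE_inv2 : forall G N C E M T, ctyp G N C (plugE E M) T ->
  exists T', ctyp G N C M T' /\ forall N' M', (forall x, occC x (plugE E M) = true -> N' x = N x) ->
    ctyp G N' C M' T' -> ctyp G N' C (plugE E M') T.
Proof.
  induction E; simpl; intros.
  - eauto.
  - inversion H; subst. destruct (IHE _ _ H3) as [T' [H1 H2]].
    exists T'; split; auto. intros. econstructor.
    + apply H2; auto. intros x Hx; apply H0; rewrite Hx; auto.
    + eapply (proj2 (tagree _ _)); [eassumption|]. intros x Hx; apply H0; rewrite Hx; auto with bool.
Qed.

Theorem theorem12 (G : list ty) (N : nctx) (D : dctx) (C1 C2 : config) :
  ktyp G N D C1 -> red C1 C2 -> ktyp G N D C2.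
Proof.
  intros H R; revert N D H; induction R; intros N0 D0 Hk.
  -
    inversion Hk; subst. simpl in H.
    apply orb_false_iff in H as [H Fmb]. apply orb_false_iff in H as [Fab FM].
    apply Nat.eqb_neq in Fab.
    destruct (plugE_inv2 _ _ _ _ _ _ H8) as [T' [Hs Hcont]].
    inversion Hs; subst. rename A0 into B.
    assert (Hag : forall x, occC x (plugE E (CSpawn M)) = true -> upd N0 b (TRef B) x = N0 x).
    { intros x Hx. unfold upd. destruct (Nat.eqb_spec x b); auto. subst. congruence. }
    assert (HM : ctyp G (upd N0 b (TRef B)) B M TUnit).
    { eapply (proj2 (tagree _ _)); [eassumption|]. intros x Hx. apply Hag.
      clear -Hx. induction E; simpl; auto. rewrite IHE; auto. }
    apply tk_pid with (fun x => if x =? b then Some B else D0 x) B.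
    + apply H7. auto.
    + rewrite Nat.eqb_refl. auto.
    + intros x Hx. apply Nat.eqb_neq in Hx. rewrite Hx. auto.
    + apply tk_par with D0 (fun x => if x =? b then Some B else None).
      * intro x. destruct (Nat.eqb_spec x b).
        -- subst. rewrite H7 by auto. auto.
        -- destruct (D0 x); auto.
      * apply tk_actor with A; auto.
        -- unfold upd. apply Nat.eqb_neq in Fab. rewrite Fab. auto.
        -- apply Hcont; auto. constructor. constructor. unfold upd. rewrite Nat.eqb_refl. auto.
        -- rewrite Forall_forall in *. intros V HV.
           eapply (proj1 (tagree _ _)); [auto|]. intros x Hx.
           unfold upd. destruct (Nat.eqb_spec x b); auto. subst.
           assert (existsb (occV b) mb = true) by (apply existsb_exists; eauto). congruence.
      * apply tk_actor with B; auto.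
        -- unfold upd. rewrite Nat.eqb_refl. auto.
        -- rewrite Nat.eqb_refl. auto.
        -- intros x Hx. apply Nat.eqb_neq in Hx. rewrite Hx. auto.
  -
    inversion Hk; subst.
    match goal with h : ktyp _ _ _ (KActor a _ _) |- _ => inversion h; subst end.
    match goal with h : ktyp _ _ _ (KActor b _ _) |- _ => inversion h; subst end.
    match goal with h : ctyp _ _ _ (plugE _ _) _ |- _ =>
      destruct (plugE_inv _ _ _ _ _ _ h) as [T' [Hs Hcont]] end.
    inversion Hs; subst.
    match goal with h : vtyp _ _ (VName b) _ |- _ => inversion h; subst end.
    apply tk_par with D1 D2; auto.
    + apply tk_actor with A; auto. apply Hcont. constructor. constructor.
    + assert (A0 = A1) by congruence. subst.
      apply tk_actor with A1; auto. apply Forall_app; split; auto.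
  -
    inversion Hk; subst.
    destruct (plugE_inv _ _ _ _ _ _ H7) as [T' [Hs Hcont]].
    inversion Hs; subst.
    match goal with h : vtyp _ _ (VName a) _ |- _ => inversion h; subst end.
    assert (A = A0) by congruence. subst.
    apply tk_actor with A0; auto. apply Hcont. constructor. constructor.
    apply Forall_app; split; auto.
  -
    inversion Hk; subst.
    destruct (plugE_inv _ _ _ _ _ _ H7) as [T' [Hs Hcont]].
    inversion Hs; subst.
    apply tk_actor with A; auto. apply Hcont. constructor. constructor. auto.
  -
    inversion Hk; subst.
    destruct (plugE_inv _ _ _ _ _ _ H7) as [T' [Hs Hcont]].
    inversion Hs; subst. inversion H8; subst.
    apply tk_actor with T'; auto. apply Hcont. constructor. auto.
  - eapply plugG_imp; eauto.
  - inversion Hk; subst. apply tk_actor with A; auto. eapply redM_pres; eauto.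
  - apply (scong_pres _ _ _ H0). apply IHR. apply (scong_pres _ _ _ H). auto.
Qed.
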